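(* Let $n\ge2$, let $\mathcal{C}_i^X$ denote the set of maximal flags of $\mathrm{PG}(n,q)$ of type $i$ with respect to the point $X$. Then for all $i,j\in[n+1]$ and points $X,Y$, $$|\mathcal{C}_i^X\cap\mathcal{C}_j^Y|=\begin{cases}\delta_{ij}\,c(n-1)\,q^{i-1}&\text{if }X=Y,\\ c(n-2)\,q^{i-2}(q^{j-1}-\delta_{ij})&\text{if }X\neq Y.\end{cases}$$
   Context: A maximal flag of $\mathrm{PG}(n,q)$ is $(U_1,\dots,U_n)$ with $U_1\subset\cdots\subset U_n$ subspaces of $\mathbb{F}_q^{n+1}$, $\dim U_i=i$. Its type with respect to a point $X$ is the smallest $k\in[n]$ with $X\subseteq U_k$, and $n+1$ otherwise. $v(k)=\frac{q^{k+1}-1}{q-1}$ is the number of points of $\mathrm{PG}(k,q)$ and $c(k)=\prod_{i=1}^k v(i)$ is the number of maximal flags of $\mathrm{PG}(k,q)$ (with $c(0)=1$). *)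

(* Defs.v *)
From HB Require Import structures.
From mathcomp Require Import all_boot all_order all_algebra all_field.
Set Implicit Arguments. Unset Strict Implicit. Unset Printing Implicit Defensive.
Import GRing.Theory.

(* Subspaces of F^(n+1) are represented canonically by square matrices A
   with <<A>>%MS = A (row space), so that equal subspaces are equal matrices. *)
Definition is_subspace (F : fieldType) (m : nat) (A : 'M[F]_m) : bool :=
  (<<A>>%MS == A).

Definition is_point (F : fieldType) (n : nat) (X : 'M[F]_(n.+1)) : bool :=
  is_subspace X && (\rank X == 1).

(* A maximal flag (U_1,...,U_n); U_(k+1) is f k for k : 'I_n. *)
Definition is_max_flag (F : fieldType) (n : nat)
  (f : {ffun 'I_n -> 'M[F]_(n.+1)}) : bool :=
  [forall k : 'I_n, is_subspace (f k) && (\rank (f k) == k.+1)] &&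
  [forall k : 'I_n, forall l : 'I_n, (k <= l)%N ==> (f k <= f l)%MS].

(* Type of f w.r.t. X: smallest k in [n] with X <= U_k, and n+1 otherwise. *)
Definition flag_type (F : fieldType) (n : nat) (X : 'M[F]_(n.+1))
  (f : {ffun 'I_n -> 'M[F]_(n.+1)}) : nat :=
  (find (fun k : 'I_n => (X <= f k)%MS) (enum 'I_n)).+1.

Definition vPG (q k : nat) : nat := (q ^ k.+1 - 1) %/ (q - 1).
Definition cPG (q k : nat) : nat := \prod_(1 <= i < k.+1) vPG q i.

(* Main.v *)
Require Import Defs.
From HB Require Import structures.
From mathcomp Require Import all_boot all_order all_algebra all_field.
From mathcomp Require Import zify ring.
Set Implicit Arguments. Unset Strict Implicit. Unset Printing Implicit Defensive.

Lemma card_path (T : finType) (e : rel T) (Inv : nat -> T -> bool) (c : nat -> nat) (K : nat) :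
  (forall k x, k < K -> Inv k x -> #|[set y | e x y]| = c k) ->
  (forall k x y, Inv k x -> e x y -> Inv k.+1 y) ->
  forall m k x, k + m <= K -> Inv k x ->
  #|[set t : m.-tuple T | path e x t]| = \prod_(k <= l < k + m) c l.
Proof.
move=> Hc Hinv; elim=> [|m IH] k x hK hx.
  rewrite addn0 big_geq // ; transitivity #|{: 0.-tuple T}|; last by rewrite card_tuple.
  by apply: eq_card => t; rewrite !inE (tuple0 t).
have -> : [set t : m.+1.-tuple T | path e x t] =
   (fun p : T * m.-tuple T => cons_tuple p.1 p.2) @: [set p : T * m.-tuple T | e x p.1 && path e p.1 p.2].
  apply/setP => u; rewrite inE; apply/idP/imsetP.
    case/tupleP: u => y t' /= /andP[exy pt]; exists (y, t') => //.
    by rewrite inE exy.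
  by case=> [[y t]]; rewrite inE /= => ? ->.
rewrite card_imset; last first.
  by case=> [y t] [y' t'] /= [-> /val_inj ->].
rewrite -sum1_card.
rewrite (eq_bigl (fun p : T * m.-tuple T => e x p.1 && path e p.1 p.2)); last first.
  by move=> p; rewrite inE.
rewrite big_mkcond /= -(pair_big predT predT (fun y (t : m.-tuple T) => if e x y && path e y t then 1 else 0)) /=.
rewrite (eq_bigr (fun y => if e x y then \prod_(k.+1 <= l < k.+1 + m) c l else 0)); last first.
  move=> y _; case: ifP => exy /=; last by rewrite big1.
  rewrite -(IH k.+1 y) ?addSnnS //; last exact: Hinv hx exy.
  by rewrite -sum1_card [RHS]big_mkcond; apply: eq_bigr => t _; rewrite inE.
rewrite -big_mkcond sum_nat_const.
have -> : #|(fun y => e x y)| = c k.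
  rewrite -(Hc k x) //; last by apply: leq_trans hK; rewrite -addn1 leq_add2l.
  by apply: eq_card => y; rewrite inE.
by rewrite addnS [RHS]big_ltn ?ltnS ?leq_addr // addSnnS.
Qed.

Section LA.
Variable F : finFieldType.
Variable N : nat.
Local Notation M := 'M[F]_N.
Local Notation q := #|F|.

Lemma cardV m (A : 'M[F]_(m,N)) : #|[set v : 'rV[F]_N | (v <= A)%MS]| = q ^ \rank A.
Proof.
have -> : [set v : 'rV_N | (v <= A)%MS] = [set (u *m row_base A)%R | u : 'rV_(\rank A)].
  apply/setP=> v; rewrite inE; apply/idP/imsetP.
    by rewrite -(eq_row_base A) => /submxP [u ->]; exists u.
  by case=> u _ ->; rewrite -(eq_row_base A) submxMl.
by rewrite card_imset ?card_mx ?mul1n //; exact: row_free_inj (row_base_free A).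
Qed.

Lemma rank_addpt m1 m2 (A : 'M[F]_(m1,N)) (B : 'M[F]_(m2,N)) :
  \rank B = 1 -> ~~ (B <= A)%MS -> \rank (A + B)%MS = (\rank A).+1.
Proof.
move=> rB nBA; have := mxrank_sum_cap A B; rewrite rB addn1.
suff -> : \rank (A :&: B)%MS = 0 by rewrite addn0.
have : \rank (A :&: B)%MS <= 1 by rewrite -rB mxrankS // capmxSr.
rewrite leq_eqVlt ltnS leqn0 => /orP[h|/eqP //]; exfalso.
move: h; rewrite -{1}rB (mxrank_leqif_eq (capmxSr A B)).2 => /andP[_ h].
by move: nBA; rewrite (submx_trans h (capmxSl A B)).
Qed.

Definition estep (W0 W : M) := [&& is_subspace W, \rank W == (\rank W0).+1 & (W0 <= W)%MS].

Lemma step_gen m (S : M) (X : 'M[F]_(m,N)) : ~~ (X <= S)%MS -> \rank X = 1 ->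
  estep S <<(S + X)%MS>>%MS.
Proof.
move=> nXS rX; rewrite /estep /is_subspace genmx_id eqxx /= mxrank_gen rank_addpt // eqxx /=.
by rewrite !genmxE addsmxSl.
Qed.

Lemma step_eq m (S W : M) (X : 'M[F]_(m,N)) : estep S W -> ~~ (X <= S)%MS -> \rank X = 1 ->
  (X <= W)%MS -> W = <<(S + X)%MS>>%MS.
Proof.
case/and3P => /eqP sW /eqP rW sSW nXS rX sXW.
have sSXW : (S + X <= W)%MS by rewrite addsmx_sub sSW.
rewrite -sW; apply/genmxP.
have /andP[_ ->] : (S + X == W)%MS by rewrite -(mxrank_leqif_eq sSXW).2 rank_addpt // rW.
by rewrite sSXW.
Qed.

Lemma L2 (S X : M) : ~~ (X <= S)%MS -> \rank X = 1 ->
  #|[set W | estep S W && (X <= W)%MS]| = 1.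
Proof.
move=> nXS rX; rewrite -(cards1 (<<(S + X)%MS>>%MS)); apply: eq_card => W; rewrite !inE.
apply/idP/eqP; first by case/andP => sW sXW; exact: step_eq sW nXS rX sXW.
by move=> ->; rewrite step_gen // genmxE addsmxSr.
Qed.

Lemma rank_vec (S : M) (v : 'rV[F]_N) : ~~ (v <= S)%MS -> \rank v = 1.
Proof.
by move=> nvS; rewrite rank_rV; case: eqP nvS => // ->; rewrite sub0mx.
Qed.

Lemma L1 (S T : M) : (S <= T)%MS ->
  #|[set W | estep S W && (W <= T)%MS]| * (q ^ (\rank S).+1 - q ^ \rank S)
  = q ^ \rank T - q ^ \rank S.
Proof.
move=> sST.
have cardD : forall A : M, (S <= A)%MS ->
    #|[set v : 'rV[F]_N | (v <= A)%MS && ~~ (v <= S)%MS]| = q ^ \rank A - q ^ \rank S.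
  move=> A sSA.
  have -> : [set v : 'rV[F]_N | (v <= A)%MS && ~~ (v <= S)%MS] =
      [set v : 'rV_N | (v <= A)%MS] :\: [set v : 'rV_N | (v <= S)%MS].
    by apply/setP=> v; rewrite !inE andbC.
  rewrite cardsD !cardV; congr (_ - _).
  have -> : [set v : 'rV_N | (v <= A)%MS] :&: [set v : 'rV_N | (v <= S)%MS]
      = [set v : 'rV_N | (v <= S)%MS].
    by apply/setP=> v; rewrite !inE; apply/andb_idl => /submx_trans; apply.
  by rewrite cardV.
rewrite -cardD // -[RHS]sum1_card.
rewrite (partition_big (fun v : 'rV[F]_N => <<(S + v)%MS>>%MS)
           (fun W => estep S W && (W <= T)%MS)); last first.
  move=> v; rewrite inE => /andP[vT nvS].
  by rewrite step_gen ?(rank_vec nvS) // genmxE addsmx_sub sST.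
rewrite -sum_nat_const (eq_bigl (fun W => estep S W && (W <= T)%MS)); last first.
  by move=> W; rewrite inE.
apply: eq_bigr => W /andP[sW sWT].
have /and3P[_ /eqP rW sSW] := sW.
rewrite -rW -cardD // -sum1_card; apply: eq_bigl => v; rewrite !inE.
apply/idP/idP.
  case/andP=> vW nvS; rewrite nvS (submx_trans vW sWT) /=.
  by rewrite -(step_eq sW nvS (rank_vec nvS) vW) eqxx.
case/andP=> /andP[vT nvS] /eqP <-; rewrite nvS genmxE addsmxSr.
by [].
Qed.
End LA.


Section Arith.
Variable q : nat.
Hypothesis q1 : 1 < q.

Definition G d := \sum_(e < d.+1) q ^ e.
Definition Pi m := \prod_(d < m) G d.

Lemma G0 : G 0 = 1. Proof. by rewrite /G big_ord1. Qed.
Lemma GS d : G d.+1 = 1 + q * G d.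
Proof.
rewrite /G big_ord_recl expn0; congr (_ + _); rewrite big_distrr /=.
by apply: eq_bigr => e _; rewrite expnS.
Qed.

Lemma Gmul d k : G d * (q ^ k.+1 - q ^ k) = q ^ (k + d).+1 - q ^ k.
Proof.
elim: d k => [|d IH] k; first by rewrite G0 mul1n addn0.
rewrite GS mulnDl mul1n -mulnA IH mulnBr -!expnS.
have h1 : q ^ k <= q ^ k.+1 by rewrite leq_exp2l // ltnW.
have h2 : q ^ k.+1 <= q ^ (k + d).+2 by rewrite leq_exp2l //; lia.
rewrite addnS; lia.
Qed.

Lemma G_vPG d : vPG q d = G d.
Proof.
rewrite /vPG -(Gmul d 0) expn0 expn1 mulnK //; lia.
Qed.

Lemma Pi_cPG k : cPG q k = Pi k.+1.
Proof.
rewrite /cPG /Pi big_ord_recl G0 mul1n big_add1 /= big_mkord.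
by apply: eq_bigr => d _; rewrite G_vPG.
Qed.

Lemma PiS m : Pi m.+1 = Pi m * G m.
Proof. by rewrite /Pi big_ord_recr. Qed.

Lemma prod_formula (c P : nat -> nat) : P 0 = 1 -> (forall m, P m * c m = P m.+1) ->
  forall m, \prod_(r < m) c r = P m.
Proof.
move=> P0 Ps; elim=> [|m IH]; first by rewrite big_ord0 P0.
by rewrite big_ord_recr IH /= Ps.
Qed.

Definition cA a r := if a <= r then q * G r else if r.+1 == a then 1 else G r.+1.
Definition cB a b r := if a <= r then q * q * G r.-1 else if r.+1 == a then 1
   else if b <= r then q * G r else if r.+1 == b then 1 else G r.+1.

Lemma prodA a m : a <= m -> \prod_(r < m) cA a r = q ^ (m - a) * Pi m.
Proof.
move=> am.
rewrite (@prod_formula _ (fun m => if m < a then Pi m.+1 else q ^ (m - a) * Pi m)) //; first by rewrite ltnNge am.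
  case: a {am} => [|a] /=; rewrite /Pi ?big_ord1 ?G0 ?expn0 ?mul1n ?big_ord0 //.
move=> k; rewrite /cA.
case: (ltngtP k.+1 a) => h.
- rewrite (_ : a <= k = false); last by lia.
  by rewrite -PiS.
- rewrite (_ : a <= k = true); last by lia.
  rewrite (_ : k.+1 - a = (k - a).+1); last by lia.
  by rewrite PiS expnS; ring.
- rewrite (_ : a <= k = false); last by lia.
  by rewrite (_ : k.+1 - a = 0) ?muln1 //; lia.
Qed.
Lemma prodB a b m : b < a -> a <= m ->
  \prod_(r < m) cB a b r = q ^ (a.-1 - b + (m - a) * 2) * Pi m.-1.
Proof.
move=> ba am.
rewrite (@prod_formula _ (fun m => if m < b then Pi m.+1 else if m < a then q ^ (m - b) * Pi m
   else q ^ (a.-1 - b + (m - a) * 2) * Pi m.-1)) //.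
- rewrite (_ : m < b = false); last by lia.
  by rewrite (_ : m < a = false) //; lia.
- case: b ba => [|b] ba /=; first by rewrite ba /Pi big_ord0.
  by rewrite /Pi big_ord1 G0.
clear am => k; rewrite /cB.
do 8 try (case: ifP => ?; try (exfalso; lia)).
- rewrite (_ : k.+1 - b = 0); last by lia.
  by rewrite expn0 mul1n muln1.
- by rewrite -PiS.
- rewrite (_ : a.-1 - b + (k.+1 - a) * 2 = k - b); last by lia.
  by rewrite muln1.
- rewrite (_ : k.+1 - b = (k - b).+1); last by lia.
  by rewrite PiS expnS; ring.
- rewrite (_ : a.-1 - b + (k.+1 - a) * 2 = (a.-1 - b + (k - a) * 2).+2); last by lia.
  have -> : k.+1.-1 = k.-1.+1 by lia.
  by rewrite PiS !expnS; ring.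
Qed.

End Arith.


Lemma path_and (T : Type) (r : rel T) (t : pred T) x s :
  path (fun a b => r a b && t b) x s = path r x s && all t s.
Proof. elim: s x => [|y s IH] x /=; first by []. by rewrite IH; case: (r x y); case: (t y); case: (path r y s). Qed.

Lemma card_andN (T : finType) (a b : pred T) :
  #|[set x | a x && ~~ b x]| = #|[set x | a x]| - #|[set x | a x && b x]|.
Proof.
rewrite -(cardsID [set x | b x] [set x | a x]).
have -> : [set x | a x] :&: [set x | b x] = [set x | a x && b x] by apply/setP => x; rewrite !inE.
rewrite addKn; apply: eq_card => x; by rewrite !inE andbC.
Qed.

Section Main.
Variable F : finFieldType.
Variable n : nat.
Local Notation M := 'M[F]_n.+1.
Local Notation q := #|F|.
Let q1 : 1 < q. Proof. exact: card_finNzRing_gt1. Qed.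

Definition sq (f : {ffun 'I_n -> M}) := map f (enum 'I_n).

Lemma card_ffun_path (e : rel M) x :
  #|[set f : {ffun 'I_n -> M} | path e x (sq f)]| = #|[set t : n.-tuple M | path e x t]|.
Proof.
have vt : forall f : {ffun 'I_n -> M}, val [tuple f i | i < n] = sq f.
  by move=> f; rewrite /= /mktuple.
have inj : injective (fun f : {ffun 'I_n -> M} => [tuple f i | i < n]).
  move=> f1 g /= h; apply/ffunP => i.
  by rewrite -(tnth_mktuple f1 i) -(tnth_mktuple g i) h.
rewrite -(card_imset _ inj); apply: eq_card => t; rewrite inE.
apply/imsetP/idP.
  by case=> f1; rewrite inE => pf ->; rewrite vt.
move=> pt; exists [ffun i => tnth t i]; last first.
  by apply: eq_from_tnth => i; rewrite tnth_mktuple ffunE.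
rewrite inE -vt.
by have -> : [tuple [ffun i => tnth t i] i | i < n] = t
  by apply: eq_from_tnth => i; rewrite tnth_mktuple ffunE.
Qed.

Lemma nth_sq f (k : 'I_n) x0 : nth x0 (sq f) k = f k.
Proof. by rewrite (nth_map k) ?size_enum_ord // nth_ord_enum. Qed.

Lemma path_sq (e : rel M) x0 f :
  path e x0 (sq f) = [forall k : 'I_n, e (nth x0 (x0 :: sq f) k) (f k)].
Proof.
apply/(pathP x0)/forallP.
  by move=> H k; rewrite -(nth_sq f k x0); apply: H; rewrite size_map size_enum_ord.
move=> H i; rewrite size_map size_enum_ord => hi.
by have := H (Ordinal hi); rewrite (nth_sq f (Ordinal hi) x0).
Qed.

Lemma nth_prev f k (hk : k.+1 < n) : nth (0%R : M) (0%R :: sq f) k.+1 = f (Ordinal (ltnW hk)).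
Proof. by rewrite /= -(nth_sq f _ 0%R). Qed.

Lemma rk_mf (f : {ffun 'I_n -> M}) : is_max_flag f -> forall k, \rank (f k) = k.+1.
Proof. by case/andP => /forallP H _ k; case/andP: (H k) => _ /eqP. Qed.

Lemma maxflagE (f : {ffun 'I_n -> M}) : is_max_flag f = path (@estep F n.+1) 0%R (sq f).
Proof.
rewrite path_sq; apply/idP/forallP.
  case/andP => /forallP H1 /forallP H2 [[|k] hk] /=.
    rewrite /estep; case/andP: (H1 (Ordinal hk)) => -> /= /eqP ->; by rewrite mxrank0 sub0mx.
  rewrite /estep (nth_sq f (Ordinal (ltnW hk))).
  case/andP: (H1 (Ordinal hk)) => -> /= /eqP ->.
  case/andP: (H1 (Ordinal (ltnW hk))) => _ /= /eqP ->; rewrite eqxx /=.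
  by have := H2 (Ordinal (ltnW hk)) => /forallP /(_ (Ordinal hk)) /implyP; apply.
move=> H.
have rk : forall k (hk : k < n), \rank (f (Ordinal hk)) = k.+1.
  elim=> [|k IH] hk.
    by have := H (Ordinal hk); case/and3P => _ /eqP -> _; rewrite /= mxrank0.
  have := H (Ordinal hk); rewrite /= (nth_sq f (Ordinal (ltnW hk))).
  by case/and3P => _ /eqP -> _; rewrite IH.
have mono : forall d k (h1 : k < n) (h2 : k + d < n), (f (Ordinal h1) <= f (Ordinal h2))%MS.
  elim=> [|d IH] k h1 h2.
    by have -> : Ordinal h2 = Ordinal h1 by apply: val_inj; rewrite /= addn0.
  have h3 : k + d < n by apply: ltn_trans h2; rewrite addnS.
  apply: submx_trans (IH k h1 h3) _.
  have E : nth 0%R (0%R :: sq f) (k + d.+1) = f (Ordinal h3) by rewrite addnS /= (nth_sq f (Ordinal h3)).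
  have := H (Ordinal h2); rewrite /= E.
  by case/and3P.
apply/andP; split; apply/forallP.
  move=> [k hk]; have := H (Ordinal hk); case/and3P => -> _ _ /=.
  by rewrite rk.
move=> [k hk]; apply/forallP => -[l hl]; apply/implyP => /= kl.
have hl' : k + (l - k) < n by rewrite subnKC.
have -> : Ordinal hl = Ordinal hl' by apply: val_inj; rewrite /= subnKC.
exact: mono.
Qed.

Lemma mono_mf (f : {ffun 'I_n -> M}) : is_max_flag f -> forall k l : 'I_n, k <= l -> (f k <= f l)%MS.
Proof. by case/andP => _ /forallP H k l kl; have /forallP/(_ l)/implyP := H k; apply. Qed.

Lemma typeP (f : {ffun 'I_n -> M}) (X : M) (k : 'I_n) : is_max_flag f -> (X <= f k)%MS = (flag_type X f <= k.+1).
Proof.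
move=> mf; rewrite /flag_type ltnS.
set m := find _ _.
case: (leqP m k) => hmk.
  have hm : m < size (enum 'I_n) by rewrite size_enum_ord; exact: leq_ltn_trans hmk (ltn_ord k).
  have := nth_find k (_ : has (fun k => X <= f k)%MS (enum 'I_n)); rewrite ?has_find // -/m.
  set o := nth k (enum 'I_n) m => Xo.
  have om : (o : nat) = m by rewrite /o nth_enum_ord // -(size_enum_ord n).
  apply: (submx_trans (Xo hm)); apply: (mono_mf mf); by rewrite om.
have := before_find k hmk; rewrite nth_ord_enum => ->.
by [].
Qed.

Lemma ft_range (f : {ffun 'I_n -> M}) (X : M) : 1 <= flag_type X f <= n.+1.
Proof.
by rewrite /flag_type /= ltnS; apply: leq_trans (find_size _ _) _; rewrite size_enum_ord.
Qed.

Lemma typeE (f : {ffun 'I_n -> M}) (X : M) i : is_max_flag f -> 1 <= i <= n.+1 ->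
  (flag_type X f == i) = [forall k : 'I_n, (X <= f k)%MS == (i <= k.+1)].
Proof.
move=> mf hi; apply/eqP/forallP.
  by move=> <- k; rewrite typeP.
move=> H.
have H' : forall k : 'I_n, (flag_type X f <= k.+1) == (i <= k.+1) by move=> k; rewrite -typeP.
move: (ft_range f X) H'; move: (flag_type X f) => m hm H'.
case: (ltngtP m i) => h //.
  have hk : m.-1 < n by lia.
  have := H' (Ordinal hk); rewrite /= prednK; last by lia.
  by rewrite leqnn (_ : i <= m = false) //; lia.
have hk : i.-1 < n by lia.
have := H' (Ordinal hk); rewrite /= prednK; last by lia.
by rewrite leqnn (_ : m <= i = false) //; lia.
Qed.

Definition tcond (X : M) i (W : M) := (X <= W)%MS == (i <= \rank W).

Lemma all_sq (t : pred M) f : all t (sq f) = [forall k : 'I_n, t (f k)].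
Proof.
rewrite all_map; apply/allP/forallP => H k; last by move=> _; exact: H.
by apply: H; rewrite mem_enum.
Qed.

Lemma tcond_sq (f : {ffun 'I_n -> M}) (X : M) i : is_max_flag f -> 1 <= i <= n.+1 ->
  all (tcond X i) (sq f) = (flag_type X f == i).
Proof.
move=> mf hi; rewrite typeE // all_sq; apply: eq_forallb => k.
by rewrite /tcond rk_mf.
Qed.

End Main.


Section Count.
Variable F : finFieldType.
Variable n : nat.
Local Notation M := 'M[F]_n.+1.
Local Notation q := #|F|.
Let q1 : 1 < q. Proof. exact: card_finNzRing_gt1. Qed.

Lemma L1G (S T : M) : (S <= T)%MS -> \rank S < \rank T ->
  #|[set W | estep S W && (W <= T)%MS]| = G q (\rank T - (\rank S).+1).
Proof.
move=> sST rST; apply/eqP.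
have pos : 0 < q ^ (\rank S).+1 - q ^ \rank S by rewrite subn_gt0 ltn_exp2l.
rewrite -(eqn_pmul2r pos) L1 // (Gmul q1).
by rewrite (_ : (\rank S + (\rank T - (\rank S).+1)).+1 = \rank T) //; lia.
Qed.

Lemma total (S : M) : \rank S <= n -> #|[set W | estep S W]| = G q (n - \rank S).
Proof.
move=> rS.
have -> : n - \rank S = \rank (1%:M : M)%R - (\rank S).+1 by rewrite mxrank1; lia.
rewrite -L1G ?submx1 ?mxrank1 //.
by apply: eq_card => W; rewrite !inE submx1 andbT.
Qed.

Lemma point_facts (X : M) : is_point X -> \rank X = 1 /\ ~~ (X <= (0 : M)%R)%MS.
Proof.
case/andP => _ /eqP rX; split => //; rewrite submx0; apply/eqP => X0.
by move: rX; rewrite X0 mxrank0.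
Qed.

Lemma estep_rank (S W : M) : estep S W -> \rank W = (\rank S).+1.
Proof. by case/and3P => _ /eqP. Qed.

Lemma sub0_subspace : is_subspace (0 : M)%R.
Proof. by rewrite /is_subspace genmx0. Qed.

Definition eA (X : M) i (W0 W : M) := estep W0 W && tcond X i W.

Lemma setA (X : M) i : 1 <= i <= n.+1 ->
  [set f : {ffun 'I_n -> M} | is_max_flag f && (flag_type X f == i)] =
  [set f | path (eA X i) 0%R (sq f)].
Proof.
move=> hi; apply/setP => f; rewrite !inE /eA path_and -maxflagE.
by case mf: (is_max_flag f) => //=; rewrite tcond_sq.
Qed.

Lemma countA (X : M) i : is_point X -> 1 <= i <= n.+1 ->
  #|[set f : {ffun 'I_n -> M} | is_max_flag f && (flag_type X f == i)]| = q ^ (i - 1) * Pi q n.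
Proof.
move=> pX hi; have [rX nX0] := point_facts pX.
rewrite setA // card_ffun_path.
set a := n.+1 - i.
rewrite (@card_path _ (eA X i) (fun k W => [&& is_subspace W, \rank W == k & tcond X i W])
   (fun l => cA q a (n - l.+1)) n _ _ n 0) //.
- rewrite add0n (_ : i - 1 = n - a); last by lia.
  rewrite -(@prodA q q1 a n); last by lia.
  rewrite big_nat_rev big_mkord; apply: eq_bigr => l _; congr cA; have := ltn_ord l; lia.
- move=> k S kn /and3P[sS /eqP rS /eqP tS].
  rewrite /cA.
  case: (leqP i k) => hik.
    rewrite (_ : a <= n - k.+1 = false); last by lia.
    rewrite (_ : (n - k.+1).+1 == a = false); last by lia.
    rewrite (_ : (n - k.+1).+1 = n - \rank S); last by lia.
    rewrite -total ?rS //; last by lia.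
    apply: eq_card => W; rewrite !inE /eA.
    case sW: (estep S W) => //=; rewrite /tcond (estep_rank sW) rS.
    have /and3P[_ _ sSW] := sW.
    rewrite (submx_trans _ sSW) ?tS ?rS //; last by lia.
  have nXS : ~~ (X <= S)%MS by rewrite tS rS -ltnNge.
  case: (ltngtP k.+1 i) hik => // hki _.
    rewrite (_ : a <= n - k.+1 = true); last by lia.
    have -> : [set y | eA X i S y] = [set W | estep S W && ~~ (X <= W)%MS].
      apply/setP => W; rewrite !inE /eA.
      case sW: (estep S W) => //=; rewrite /tcond (estep_rank sW) rS.
      by rewrite (_ : i <= k.+1 = false) ?eqbF_neg //; lia.
    rewrite card_andN L2 // total ?rS; last by lia.
    by rewrite (_ : n - k = (n - k.+1).+1) ?GS //; lia.
  rewrite (_ : a <= n - k.+1 = false); last by lia.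
  rewrite (_ : (n - k.+1).+1 == a = true); last by lia.
  rewrite -(L2 nXS rX); apply: eq_card => W; rewrite !inE /eA.
  case sW: (estep S W) => //=; rewrite /tcond (estep_rank sW) rS hki.
  by rewrite leqnn eqb_id.
- move=> k S W /and3P[_ /eqP rS _] /andP[sW tW].
  by rewrite (estep_rank sW) rS eqxx tW; case/and3P: sW => ->.
- rewrite sub0_subspace mxrank0 /= /tcond mxrank0 (negbTE nX0) leqn0; apply/eqP; lia.
Qed.
End Count.


Section CountB.
Variable F : finFieldType.
Variable n : nat.
Local Notation M := 'M[F]_n.+1.
Local Notation q := #|F|.
Let q1 : 1 < q. Proof. exact: card_finNzRing_gt1. Qed.

Lemma eq_sub_rank m1 m2 (A : 'M[F]_(m1, n.+1)) (B : 'M[F]_(m2, n.+1)) :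
  (A <= B)%MS -> \rank B <= \rank A -> (B <= A)%MS.
Proof.
move=> sAB rBA; have := (mxrank_leqif_eq sAB).2.
by rewrite eqn_leq rBA mxrankS //= => /esym /andP[].
Qed.

Lemma rank_adds_le m1 m2 (A : 'M[F]_(m1, n.+1)) (B : 'M[F]_(m2, n.+1)) :
  \rank (A + B)%MS <= \rank A + \rank B.
Proof. by rewrite -mxrank_sum_cap leq_addr. Qed.

Lemma keyT (S W X Y : M) : estep S W -> ~~ (X <= S)%MS -> ~~ (Y <= S + X)%MS ->
  \rank X = 1 -> \rank Y = 1 ->
  ((X <= W)%MS || (Y <= W + X)%MS) = (W <= S + X + Y)%MS.
Proof.
move=> sW nXS nYSX rX rY.
have /and3P[_ /eqP rW sSW] := sW.
have rSX : \rank (S + X)%MS = (\rank S).+1 by rewrite rank_addpt.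
have rT : \rank (S + X + Y)%MS = (\rank S).+2 by rewrite rank_addpt // rSX.
have sXT : (X <= S + X + Y)%MS by rewrite (submx_trans (addsmxSr S X)) ?addsmxSl.
have sST : (S <= S + X + Y)%MS by rewrite (submx_trans (addsmxSl S X)) ?addsmxSl.
have sYT : (Y <= S + X + Y)%MS by rewrite addsmxSr.
apply/idP/idP.
  case/orP => [sXW|sYWX].
    rewrite (step_eq sW nXS rX sXW) genmxE.
    exact: (submx_trans _ (addsmxSl _ _)).
  have sTWX : (S + X + Y <= W + X)%MS.
    by rewrite !addsmx_sub sYWX addsmxSr (submx_trans sSW) ?addsmxSl.
  have := eq_sub_rank sTWX; rewrite rT.
  move/(_ (leq_trans (rank_adds_le W X) _)); rewrite rW rX addn1 leqnn => /(_ isT) sWXT.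
  exact: submx_trans (addsmxSl W X) sWXT.
move=> sWT; case sXW: (X <= W)%MS => //=.
have rWX : \rank (W + X)%MS = (\rank S).+2 by rewrite rank_addpt ?sXW // rW.
have sWXT : (W + X <= S + X + Y)%MS by rewrite addsmx_sub sWT.
have := eq_sub_rank sWXT; rewrite rT rWX leqnn => /(_ isT).
exact: submx_trans sYT.
Qed.


Definition tB (X Y : M) i j (W : M) :=
  [&& tcond X i W, tcond Y j W & (\rank W < i) ==> ~~ (Y <= W + X)%MS].
Definition eB (X Y : M) i j (W0 W : M) := estep W0 W && tB X Y i j W.

Lemma setB (X Y : M) i j : 1 <= i -> i < j -> j <= n.+1 ->
  [set f : {ffun 'I_n -> M} | [&& is_max_flag f, flag_type X f == i & flag_type Y f == j]] =
  [set f | path (eB X Y i j) 0%R (sq f)].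
Proof.
move=> i1 ij jn; apply/setP => f; rewrite !inE /eB path_and -maxflagE.
case mf: (is_max_flag f) => //=.
have hi : 1 <= i <= n.+1 by lia.
have hj : 1 <= j <= n.+1 by lia.
rewrite -(tcond_sq X mf hi) -(tcond_sq Y mf hj).
rewrite !all_sq; apply/andP/forallP; last first.
  by move=> H; split; apply/forallP => k; case/and3P: (H k).
case=> /forallP HX /forallP HY k; rewrite /tB HX HY /=; apply/implyP.
rewrite rk_mf // => ki.
have hl : i.-1 < n by lia.
have Xl : (X <= f (Ordinal hl))%MS.
  have := HX (Ordinal hl); rewrite /tcond rk_mf //= prednK; last by lia.
  by rewrite leqnn => /eqP ->.
have nYl : ~~ (Y <= f (Ordinal hl))%MS.
  have := HY (Ordinal hl); rewrite /tcond rk_mf //= prednK; last by lia.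
  have -> : (j <= i) = false by lia.
  by move/eqP ->.
apply: contra nYl => /submx_trans; apply.
by rewrite addsmx_sub Xl andbT (mono_mf mf) //=; lia.
Qed.

Ltac nlia := repeat match goal with
  | H : is_true (is_point _) |- _ => clear H
  | H : is_true (_ != _) |- _ => clear H
  | H : is_true (~~ (_ <= _)%MS) |- _ => clear H
  | H : is_true ((_ <= _)%MS) |- _ => clear H
  | H : is_true (_ ==> _) |- _ => clear H
  | H : (_ <= _)%MS = _ |- _ => clear H
  | H : is_true (is_subspace _) |- _ => clear H
  | H : estep _ _ = _ |- _ => clear H
  | H : is_true (estep _ _) |- _ => clear H
  end; lia.

Lemma countB (X Y : M) i j : is_point X -> is_point Y -> X != Y -> 1 <= i -> i < j -> j <= n.+1 ->
  #|[set f : {ffun 'I_n -> M} | [&& is_max_flag f, flag_type X f == i & flag_type Y f == j]]|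
  = q ^ (i + j - 3) * Pi q n.-1.
Proof.
move=> pX pY XY i1 ij jn.
have [rX nX0] := point_facts pX; have [rY nY0] := point_facts pY.
rewrite setB // card_ffun_path.
set a := n.+1 - i; set b := n.+1 - j.
rewrite (@card_path _ (eB X Y i j) (fun k W => [&& is_subspace W, \rank W == k & tB X Y i j W])
   (fun l => cB q a b (n - l.+1)) n _ _ n 0) //.
- rewrite add0n (_ : i + j - 3 = a.-1 - b + (n - a) * 2); last by nlia.
  rewrite -(@prodB q q1 a b n); try nlia.
  rewrite big_nat_rev big_mkord; apply: eq_bigr => l _; congr cB; have := ltn_ord l; nlia.
- move=> k S kn /and3P[sS /eqP rS /and3P[/eqP tXS /eqP tYS eS]].
  rewrite rS in tXS tYS eS.
  rewrite /cB.
  case: (leqP j k) => hjk.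
    rewrite (_ : a <= n - k.+1 = false); last by nlia.
    rewrite (_ : (n - k.+1).+1 == a = false); last by nlia.
    rewrite (_ : b <= n - k.+1 = false); last by nlia.
    rewrite (_ : (n - k.+1).+1 == b = false); last by nlia.
    rewrite (_ : (n - k.+1).+1 = n - \rank S); last by nlia.
    rewrite -total ?rS; last by nlia.
    apply: eq_card => W; rewrite !inE /eB.
    case sW: (estep S W) => //=; rewrite /tB /tcond (estep_rank sW) rS.
    have /and3P[_ _ sSW] := sW.
    rewrite (submx_trans _ sSW) ?tXS; last by nlia.
    rewrite (submx_trans _ sSW) ?tYS; last by nlia.
    have -> : (i <= k.+1) = true by nlia.
    have -> : (j <= k.+1) = true by nlia.
    have -> : (k.+1 < i) = false by nlia.
    by [].
  have nYS : ~~ (Y <= S)%MS by rewrite tYS -ltnNge.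
  case: (ltngtP k.+1 j) hjk => // hkj _.
    case: (leqP i k) => hik.
      rewrite (_ : a <= n - k.+1 = false); last by nlia.
      rewrite (_ : (n - k.+1).+1 == a = false); last by nlia.
      rewrite (_ : b <= n - k.+1 = true); last by nlia.
      have -> : [set y | eB X Y i j S y] = [set W | estep S W && ~~ (Y <= W)%MS].
        apply/setP => W; rewrite !inE /eB.
        case sW: (estep S W) => //=; rewrite /tB /tcond (estep_rank sW) rS.
        have /and3P[_ _ sSW] := sW.
        rewrite (submx_trans _ sSW) ?tXS; last by nlia.
        have -> : (i <= k.+1) = true by nlia.
        have -> : (j <= k.+1) = false by nlia.
        have -> : (k.+1 < i) = false by nlia.
        by rewrite /= andbT eqbF_neg.
      rewrite card_andN L2 // total ?rS; last by nlia.
      by rewrite (_ : n - k = (n - k.+1).+1) ?GS //; nlia.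
    have nXS : ~~ (X <= S)%MS by rewrite tXS -ltnNge.
    have nYSX : ~~ (Y <= S + X)%MS by rewrite (implyP eS).
    case: (ltngtP k.+1 i) hik => // hki _.
      rewrite (_ : a <= n - k.+1 = true); last by nlia.
      have -> : [set y | eB X Y i j S y] = [set W | estep S W && ~~ (W <= S + X + Y)%MS].
        apply/setP => W; rewrite !inE /eB.
        case sW: (estep S W) => //=; rewrite /tB /tcond (estep_rank sW) rS.
        rewrite -(keyT sW nXS nYSX rX rY).
        have -> : (i <= k.+1) = false by nlia.
        have -> : (j <= k.+1) = false by nlia.
        rewrite hki /= !eqbF_neg negb_or.
        have hY : (Y <= W)%MS -> (Y <= W + X)%MS by move/submx_trans; apply; exact: addsmxSl.
        by case: (Y <= W + X)%MS hY; case: (Y <= W)%MS; case: (X <= W)%MS => //= H; have := H isT.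
      have sST : (S <= S + X + Y)%MS by rewrite (submx_trans (addsmxSl S X)) ?addsmxSl.
      have rT : \rank (S + X + Y)%MS = (\rank S).+2 by rewrite rank_addpt // rank_addpt.
      rewrite card_andN L1G // ?rT // total ?rS; last by nlia.
      rewrite (_ : k.+2 - k.+1 = 1); last by nlia.
      rewrite (_ : n - k = (n - k.+1).-1.+2); last by nlia.
      rewrite !GS G0; nia.
    rewrite (_ : a <= n - k.+1 = false); last by nlia.
    rewrite (_ : (n - k.+1).+1 == a = true); last by nlia.
    rewrite -(L2 nXS rX); apply: eq_card => W; rewrite !inE /eB.
    case sW: (estep S W) => //=; rewrite /tB /tcond (estep_rank sW) rS hki leqnn.
    have -> : (j <= i) = false by nlia.
    rewrite ltnn /= andbT eqb_id.
    case sXW: (X <= W)%MS => //=.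
    rewrite (step_eq sW nXS rX sXW) genmxE.
    by rewrite (negbTE nYSX).
  rewrite (_ : a <= n - k.+1 = false); last by nlia.
  rewrite (_ : (n - k.+1).+1 == a = false); last by nlia.
  rewrite (_ : b <= n - k.+1 = false); last by nlia.
  rewrite (_ : (n - k.+1).+1 == b = true); last by nlia.
  rewrite -(L2 nYS rY); apply: eq_card => W; rewrite !inE /eB.
  case sW: (estep S W) => //=; rewrite /tB /tcond (estep_rank sW) rS hkj leqnn.
  have /and3P[_ _ sSW] := sW.
  rewrite (submx_trans _ sSW) ?tXS; last by nlia.
  have -> : (i <= j) = true by nlia.
  have -> : (j < i) = false by nlia.
  by rewrite /= andbT eqb_id.
- move=> k S W /and3P[_ /eqP rS _] /andP[sW tW].
  by rewrite (estep_rank sW) rS eqxx tW; case/and3P: sW => ->.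
- rewrite sub0_subspace mxrank0 /= /tB /tcond mxrank0 (negbTE nX0) (negbTE nY0) !leqn0.
  have -> : (i == 0) = false by apply/eqP; nlia.
  have -> : (j == 0) = false by apply/eqP; nlia.
  rewrite i1 /= adds0mx; apply: contra XY => sYX; apply/eqP.
  case/andP: pX => /eqP sX _; case/andP: pY => /eqP sY _.
  rewrite -sX -sY; apply/genmxP.
  by rewrite sYX andbT (eq_sub_rank sYX) // rX rY.
Qed.
End CountB.


Section Part.
Variable F : finFieldType.
Variable n : nat.
Local Notation M := 'M[F]_n.+1.

Lemma partition_cnt (X Y : M) i :
  #|[set f : {ffun 'I_n -> M} | is_max_flag f && (flag_type X f == i)]| =
  \sum_(j < n.+2) #|[set f : {ffun 'I_n -> M} | [&& is_max_flag f, flag_type X f == i & flag_type Y f == j]]|.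
Proof.
rewrite -sum1_card (partition_big (fun f => (inord (flag_type Y f) : 'I_n.+2)) predT) //=.
apply: eq_bigr => j _; rewrite -sum1_card; apply: eq_bigl => f; rewrite !inE.
rewrite -val_eqE /= inordK; last by have := ft_range f Y; rewrite ltnS => /andP[].
by rewrite andbA.
Qed.

Lemma swapB (X Y : M) i j :
  [set f : {ffun 'I_n -> M} | [&& is_max_flag f, flag_type X f == i & flag_type Y f == j]] =
  [set f : {ffun 'I_n -> M} | [&& is_max_flag f, flag_type Y f == j & flag_type X f == i]].
Proof. by apply/setP => f; rewrite !inE; case: (flag_type X f == i); case: (flag_type Y f == j); rewrite ?andbF. Qed.

Lemma cnt0 (X Y : M) i :
  #|[set f : {ffun 'I_n -> M} | [&& is_max_flag f, flag_type X f == i & flag_type Y f == 0]]| = 0.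
Proof.
apply/eqP; rewrite cards_eq0; apply/eqP/setP => f; rewrite !inE.
have -> : (flag_type Y f == 0) = false by have := ft_range f Y; lia.
by rewrite !andbF.
Qed.
End Part.

Unset Implicit Arguments.
Import GRing.Theory Num.Theory.
Local Open Scope ring_scope.

Theorem mainTheorem5 (F : finFieldType) (n : nat) (hn : (2 <= n)%N)
  (i j : nat) (hi : (1 <= i <= n.+1)%N) (hj : (1 <= j <= n.+1)%N)
  (X Y : 'M[F]_(n.+1)) (hX : is_point X) (hY : is_point Y) :
  let q := #|F|%N in
  (#|[set f : {ffun 'I_n -> 'M[F]_(n.+1)} |
       [&& is_max_flag f, flag_type X f == i & flag_type Y f == j]]|)%:R
  = (if X == Y then
       (i == j)%:R * (cPG q (n - 1))%:R * (q%:R : rat) ^+ (i - 1)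
     else
       (cPG q (n - 2))%:R * (q%:R : rat) ^ (i%:Z - 2)
         * ((q%:R : rat) ^+ (j - 1) - (i == j)%:R)).
Proof.
move=> q; rewrite /q.
have q1 : (1 < q)%N by exact: card_finNzRing_gt1.
have Q0 : (q%:R : rat) != 0 by rewrite pnatr_eq0; lia.
case: (eqVneq X Y) => [<-|XY].
  case: (eqVneq i j) => [<-|ij].
    have -> : [set f : {ffun 'I_n -> 'M[F]_(n.+1)} | [&& is_max_flag f, flag_type X f == i & flag_type X f == i]]
      = [set f | is_max_flag f && (flag_type X f == i)].
      by apply/setP => f; rewrite !inE; case: (flag_type X f == i); rewrite ?andbF.
    have -> : (true%:R : rat) = 1 by [].
    rewrite countA // mul1r Pi_cPG // (_ : (n - 1).+1 = n); last by lia.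
    by rewrite natrM natrX mulrC.
  have -> : (false%:R : rat) = 0 by [].
  rewrite !mul0r.
  have -> : [set f : {ffun 'I_n -> 'M[F]_(n.+1)} | [&& is_max_flag f, flag_type X f == i & flag_type X f == j]]
      = set0.
    apply/setP => f; rewrite !inE; apply/negbTE; apply/and3P => -[_ /eqP -> /eqP h].
    by move: ij; rewrite h eqxx.
  by rewrite cards0.
set Q := (#|F|%:R : rat).
apply: (mulfI Q0).
have key : Q * Q ^ (i%:Z - 2) = Q ^+ (i - 1).
  rewrite -[Q in LHS]expr1z -expfzDr //.
  by rewrite (_ : 1 + (i%:Z - 2) = (i - 1)%N); last by lia.
rewrite Pi_cPG // (_ : (n - 2).+1 = n.-1); last by lia.
set P := (Pi #|F| n.-1)%:R.
rewrite (_ : forall A B C : rat, Q * (A * B * C) = A * (Q * B) * C); last by move=> A B C; ring.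
rewrite key.
case: (ltngtP i j) => hij.
- rewrite countB //; try lia.
  rewrite subr0 natrM natrX mulrA -exprS (_ : ((i + j - 3).+1 = (i - 1) + (j - 1))%N) ?exprD; last by lia.
  by rewrite /P; ring.
- have YX : Y != X by rewrite eq_sym.
  rewrite (swapB X Y i j) countB //; try lia.
  rewrite subr0 natrM natrX mulrA -exprS (_ : ((j + i - 3).+1 = (i - 1) + (j - 1))%N) ?exprD; last by lia.
  by rewrite /P; ring.
subst j.
have tr : (true%:R : rat) = 1 by [].
rewrite tr.
pose cnt := fun j : nat => #|[set f : {ffun 'I_n -> 'M[F]_n.+1} |
    [&& is_max_flag f, flag_type X f == i & flag_type Y f == j]]|.
change (Q * (cnt i)%:R = P * Q ^+ (i - 1) * (Q ^+ (i - 1) - 1)).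
pose cntA := #|[set f : {ffun 'I_n -> 'M[F]_n.+1} | is_max_flag f && (flag_type X f == i)]|.
have hA : cntA = \sum_(j < n.+2) cnt j by exact: partition_cnt.
have cA : cntA = (#|F| ^ (i - 1) * Pi #|F| n)%N by exact: countA.
have sumQ : Q * cntA%:R = \sum_(j < n.+2) Q * (cnt j)%:R by rewrite hA natr_sum mulr_sumr.
pose h := fun j : 'I_n.+2 => if (j == 0 :> nat) then 0 else P * Q ^+ (i - 1) * Q ^+ j.-1.
have ii : (inord i : 'I_n.+2) = i :> nat by rewrite inordK //; lia.
have hh : forall j : 'I_n.+2, j != inord i -> Q * (cnt j)%:R = h j.
  move=> j' nj; rewrite /h /cnt.
  case: eqP => [j0|j0].
    by rewrite j0 cnt0 mulr0.
  have nji : (j' : nat) != i by apply: contra nj => /eqP e; apply/eqP/val_inj; rewrite /= ii.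
  have jn := ltn_ord j'.
  case: (ltngtP i j') => h'.
  - rewrite countB //; try lia.
    rewrite natrM natrX mulrA -exprS (_ : ((i + j' - 3).+1 = (i - 1) + j'.-1)%N) ?exprD; last by lia.
    by rewrite /P; ring.
  - have YX : Y != X by rewrite eq_sym.
    rewrite (swapB X Y i j') countB //; try lia.
    rewrite natrM natrX mulrA -exprS (_ : ((j' + i - 3).+1 = (i - 1) + j'.-1)%N) ?exprD; last by lia.
    by rewrite /P; ring.
  - by move: nji; rewrite h' eqxx.
have sumh : \sum_(j < n.+2) h j = P * Q ^+ (i - 1) * (G #|F| n)%:R.
  rewrite big_ord_recl /h /= add0r /G natr_sum mulr_sumr.
  by apply: eq_bigr => j _; rewrite natrX.
have spl : \sum_(j < n.+2) Q * (cnt j)%:R =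
    \sum_(j < n.+2) h j + (Q * (cnt (inord i : 'I_n.+2))%:R - h (inord i)).
  rewrite (bigD1 (inord i : 'I_n.+2)) //= [X in _ = X + _](bigD1 (inord i : 'I_n.+2)) //=.
  rewrite (eq_bigr h); last by move=> j' /hh.
  by ring.
have hi0 : h (inord i) = P * Q ^+ (i - 1) * Q ^+ (i - 1).
  by rewrite /h ii (_ : (i == 0) = false) //; [rewrite (_ : i.-1 = (i - 1)%N) //; lia | lia].
have e : Q * (cnt i)%:R = Q * cntA%:R - \sum_(j < n.+2) h j + h (inord i).
  by rewrite sumQ spl ii; ring.
rewrite e sumh hi0 cA natrM natrX.
rewrite (_ : n = n.-1.+1) ?GS ?PiS; last by lia.
rewrite natrD natrM /P /Q natrM; ring.
Qed.
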